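(* Let $U,X,Y$ be Banach spaces and let $S$ be a $(U,X,Y)$-relation. If $S=\operatorname{Sys}(A,B,C)=\operatorname{Sys}(A',B',C')$, where $A$ and $A'$ generate strongly continuous semigroups on $X$, $B,B':U\to X$ are bounded, and $C:\operatorname{Dom}(A)\to Y$, $C':\operatorname{Dom}(A')\to Y$ are bounded for the respective graph norms, then $A=A'$ (including equality of domains), $B=B'$ and $C=C'$.
   Context: For Banach spaces $U,X,Y$, a $(U,X,Y)$-relation is any subset of $C^0(\mathbb{R}_{\ge 0},U)\times C^0(\mathbb{R}_{\ge 0},X)\times C^0(\mathbb{R}_{\ge 0},Y)$; its elements $(u,x,y)$ are called input, state and output. If $A$ generates a strongly continuous semigroup $(e^{At})_{t\ge0}$ on $X$, $B:U\to X$ is bounded and $C:\operatorname{Dom}(A)\to Y$ is bounded for the graph norm of $A$, then $\operatorname{Sys}(A,B,C)$ denotes the $(U,X,Y)$-relation consisting of all $(u,x,y)$ with $u\in C^0(\mathbb{R}_{\ge0},U)$, $x\in C^0(\mathbb{R}_{\ge0},\operatorname{Dom}(A))\cap C^1(\mathbb{R}_{\ge0},X)$, $y\in C^0(\mathbb{R}_{\ge0},Y)$ satisfying $\dot x(t)=Ax(t)+Bu(t)$ and $y(t)=Cx(t)$ for all $t\ge0$. *)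

(* Defs.v *)
From HB Require Import structures.
From mathcomp Require Import all_boot all_order all_algebra.
From mathcomp Require Import all_classical all_reals all_analysis.
Set Implicit Arguments. Unset Strict Implicit. Unset Printing Implicit Defensive.
Import Order.TTheory GRing.Theory Num.Theory.
Import numFieldNormedType.Exports.
Local Open Scope classical_set_scope.
Local Open Scope ring_scope.

Section Defs.
Variable R : realType.

Definition Rge0 : set R := [set t : R | 0 <= t].

Definition bounded_linear (V W : normedModType R) (f : V -> W) : Prop :=
  (forall (a : R) (u v : V), f (a *: u + v) = a *: f u + f v) /\
  exists M : R, forall u, `|f u| <= M * `|u|.

(* strongly continuous semigroup, indexed by t >= 0 (values at t < 0 unused) *)
Definition C0_semigroup (X : normedModType R) (T : R -> X -> X) : Prop :=
  (forall t, 0 <= t -> bounded_linear (T t)) /\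
  (forall x, T 0 x = x) /\
  (forall s t x, 0 <= s -> 0 <= t -> T (s + t) x = T s (T t x)) /\
  (forall x, {within Rge0, continuous (fun t => T t x)}).

Definition is_generator_of (X : normedModType R) (T : R -> X -> X)
    (D : set X) (A : X -> X) : Prop :=
  (forall x, D x <-> exists y : X,
      (fun h : R => h^-1 *: (T h x - x)) @ 0^'+ --> y) /\
  (forall x, D x -> (fun h : R => h^-1 *: (T h x - x)) @ 0^'+ --> A x).

Definition generates_C0 (X : normedModType R) (D : set X) (A : X -> X) : Prop :=
  exists T : R -> X -> X, C0_semigroup T /\ is_generator_of T D A.

Definition graph_bounded (X Y : normedModType R) (D : set X) (A : X -> X)
    (C : X -> Y) : Prop :=
  (forall (a : R) (x z : X), D x -> D z -> C (a *: x + z) = a *: C x + C z) /\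
  exists M : R, forall x, D x -> `|C x| <= M * (`|x| + `|A x|).

Definition has_deriv_Rge0 (X : normedModType R) (x : R -> X) (t : R) (d : X) : Prop :=
  (fun h : R => h^-1 *: (x (t + h) - x t))
    @ within (fun h : R => 0 <= t + h) (0 : R)^' --> d.

Definition C1_Rge0 (X : normedModType R) (x dx : R -> X) : Prop :=
  (forall t, 0 <= t -> has_deriv_Rge0 x t (dx t)) /\
  {within Rge0, continuous dx}.

(* A (U,X,Y)-relation: functions on R are only considered on t >= 0 *)
Definition relation (U X Y : normedModType R) :=
  set ((R -> U) * (R -> X) * (R -> Y)).

Definition Sys (U X Y : normedModType R) (D : set X) (A : X -> X)
    (B : U -> X) (C : X -> Y) : relation U X Y :=
  [set uxy | let: (u, x, y) := uxy in
    {within Rge0, continuous u} /\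
    (* x in C^0(R_{>=0}, Dom(A)) for the graph norm *)
    (forall t, 0 <= t -> D (x t)) /\
    {within Rge0, continuous x} /\
    {within Rge0, continuous (fun t => A (x t))} /\
    (exists dx : R -> X, C1_Rge0 x dx /\
       forall t, 0 <= t -> dx t = A (x t) + B (u t)) /\
    {within Rge0, continuous y} /\
    (forall t, 0 <= t -> y t = C (x t))].

End Defs.

(* Main.v *)
Require Import Defs.
From HB Require Import structures.
From mathcomp Require Import all_boot all_order all_algebra.
From mathcomp Require Import all_classical all_reals all_analysis.
From mathcomp Require Import lra ring.
Import Order.TTheory GRing.Theory Num.Theory Num.Def.
Import numFieldNormedType.Exports.
Local Open Scope classical_set_scope.
Local Open Scope ring_scope.
Set Implicit Arguments. Unset Strict Implicit. Unset Printing Implicit Defensive.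

Section W.
Variables (R : realType) (X : normedModType R).

Lemma withinP (g : R -> X) :
  {within @Rge0 R, continuous g} <->
  (forall t, 0 <= t -> forall e, 0 < e -> exists2 r, 0 < r &
     forall s, 0 <= s -> `|s - t| < r -> `|g s - g t| <= e).
Proof.
rewrite subspace_continuousP; split.
- move=> H t t0 e e0.
  have := H t t0; move/cvgrPdist_le => /(_ e e0).
  rewrite /within /= => /nbhs_ballP [r r0 Hr].
  exists r => // s s0 st; rewrite -normrN opprB; apply: (Hr s) => //.
  by rewrite /ball /= -normrN opprB.
- move=> H t t0; apply/cvgrPdist_le => e e0.
  have [r r0 Hr] := H t t0 e e0.
  rewrite /within /=; apply/nbhs_ballP; exists r => // s /= ts s0.
  rewrite -normrN opprB; apply: Hr => //.
  by rewrite -normrN opprB.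
Qed.

Lemma unif_cont (f : R -> X) : {within @Rge0 R, continuous f} ->
  forall L e, 0 < e -> exists2 d, 0 < d & forall s s', 0 <= s -> s <= L ->
    0 <= s' -> s' <= L -> `|s - s'| <= d -> `|f s - f s'| <= e.
Proof.
move=> /withinP fc L e e0.
have cK : compact `[0, L] := @segment_compact _ 0 L.
have := (near_covering_withinP _).2 ((compact_near_coveringP _).1 cK).
move=> /(_ R (0^'+) (fun d x' => forall s, `[0, L]%classic s -> `|s - x'| <= d ->
   `|f s - f x'| <= e) _) NC.
have H : \forall d \near 0^'+, `[0, L]%classic `<=` (fun x' => forall s, `[0, L]%classic s -> `|s - x'| <= d ->
   `|f s - f x'| <= e).
  apply: NC.
  move=> x; rewrite /= in_itv /= => /andP[x0 xL].
  have e20 : 0 < e / 2 by rewrite divr_gt0.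
  have [r r0 Hr] := fc x x0 _ e20.
  have r20 : 0 < r / 2 by rewrite divr_gt0.
  exists ([set x' | `|x' - x| < r / 2], [set d | 0 < d < r / 2]).
  split.
  + apply/nbhs_ballP; exists (r/2) => // y; rewrite /ball /= => H.
    by rewrite -normrN opprB.
  + near=> d; apply/andP; split; first by [].
    by near: d; apply: nbhs_right_lt.
  move=> [x' d] [/= h1 /andP[d0 h2]] Kx' s Ks hs.
  move: Ks; rewrite in_itv /= => /andP[s0 sL].
  have ex' : `|f x' - f x| <= e / 2.
    apply: Hr => //; last by rewrite (lt_trans h1) // ltr_pdivrMr // ltr_pMr // ltr1n.
    by move: Kx'; rewrite /= in_itv /= => /andP[].
  have es : `|f s - f x| <= e / 2.
    apply: Hr => //.
    rewrite (le_lt_trans (ler_distD x' _ _)) //.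
    by rewrite [r in _ < r](splitr r) addrC ltr_leD // (le_trans hs) // ltW.
  rewrite (le_trans (ler_distD (f x) _ _)) //.
  by rewrite [e in _ <= e](splitr e) lerD // -opprB normrN.
  have [d [d0 Hd]] : exists d : R, 0 < d /\ `[0, L]%classic `<=` (fun x' => forall s, `[0, L]%classic s -> `|s - x'| <= d ->
   `|f s - f x'| <= e).
    near (0:R)^'+ => d; exists d; split.
      by near: d; apply: nbhs_right_gt.
    by near: d; apply: H.
  exists d => // s s' s0 sL s'0 s'L ss'.
  by apply: (Hd s'); rewrite /= ?in_itv /= ?s0 ?sL ?s'0 ?s'L.
Unshelve. all: by end_near.
Qed.
End W.

Section Prim.
Variables (R : realType) (X : completeNormedModType R) (f : R -> X).

Definition UCP (L e d : R) := forall s s', 0 <= s -> s <= L ->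
    0 <= s' -> s' <= L -> `|s - s'| <= d -> `|f s - f s'| <= e.

Definition Fn (n : nat) (t : R) : X :=
  n%:R^-1 *: \sum_(0 <= j < truncn (n%:R * t)) f (j%:R / n%:R).

Lemma trunc_bounds (N x : R) : 0 < N -> 0 <= x ->
  (truncn (N * x))%:R / N <= x /\ x < (truncn (N * x))%:R / N + N^-1.
Proof.
move=> N0 x0.
have /andP[h1 h2] := truncn_itv (mulr_ge0 (ltW N0) x0).
split; first by rewrite ler_pdivrMr // [x * N]mulrC.
by rewrite -[X in _ < _ + X]mul1r -mulrDl ltr_pdivlMr // [x * N]mulrC natr1.
Qed.

Lemma Fn_est L e d : UCP L e d -> forall n, (0 < n)%N -> n%:R^-1 <= d ->
  forall s t, 0 <= s -> s <= t -> t <= L -> t - s <= d ->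
  `|Fn n t - Fn n s - (t - s) *: f s| <= (t - s + n%:R^-1) * e + `|f s| * n%:R^-1.
Proof.
move=> uc n n0 nd s t s0 st tL tsd.
set N := n%:R. have N0 : 0 < N by rewrite ltr0n.
have iN0 : 0 < N^-1 by rewrite invr_gt0.
set a := truncn (N * s); set b := truncn (N * t).
have [ha1 ha2] := trunc_bounds N0 s0.
have [hb1 hb2] := trunc_bounds N0 (le_trans s0 st).
rewrite -/a in ha1 ha2; rewrite -/b in hb1 hb2.
have ab : (a <= b)%N by apply: le_truncn; rewrite ler_pM2l.
have Hdiff : Fn n t - Fn n s = N^-1 *: \sum_(a <= j < b) f (j%:R / N).
  by rewrite /Fn -/N -/a -/b (@big_cat_nat _ _ _ a) //= scalerDr addrAC subrr add0r.
have Hsum : \sum_(a <= j < b) f (j%:R / N) =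
    \sum_(a <= j < b) (f (j%:R / N) - f s) + (b - a)%:R *: f s.
  by rewrite sumrB sumr_const_nat scaler_nat subrK.
have e0 : 0 <= e.
  have := uc s s s0 (le_trans st tL) s0 (le_trans st tL).
  rewrite !subrr !normr0; apply; exact: (le_trans (ltW iN0) nd).
have Hterm : forall j, (a <= j < b)%N -> `|f (j%:R / N) - f s| <= e.
  move=> j /andP[aj jb].
  have h1 : a%:R / N <= j%:R / N by rewrite ler_pM2r // ler_nat.
  have h2 : j%:R / N + N^-1 <= b%:R / N.
    by rewrite -[X in _ + X]mul1r -mulrDl ler_pM2r // natr1 ler_nat.
  apply: uc; first by rewrite mulr_ge0 // ltW.
  - lra.
  - by [].
  - lra.
  - rewrite ler_norml; apply/andP; split; lra.
have HS : `|\sum_(a <= j < b) (f (j%:R / N) - f s)| <= (b - a)%:R * e.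
  apply: le_trans (ler_norm_sum _ _ _) _.
  apply: le_trans (ler_sum_nat (G := fun=> e) Hterm) _.
  by rewrite sumr_const_nat mulr_natl.
rewrite Hdiff Hsum scalerDr scalerA -addrA -scalerBl.
apply: le_trans (ler_normD _ _) _.
rewrite !normrZ (gtr0_norm iN0).
have hba : N^-1 * (b - a)%:R = b%:R / N - a%:R / N by rewrite natrB // mulrBr !(mulrC N^-1).
apply: lerD.
- apply: le_trans (ler_wpM2l (ltW iN0) HS) _.
  rewrite mulrA hba; apply: ler_wpM2r => //; lra.
- rewrite mulrC; apply: ler_wpM2l => //.
  rewrite hba ler_norml; apply/andP; split; lra.
Qed.


Hypothesis fc : {within @Rge0 R, continuous f}.

Lemma Fn0 n : Fn n 0 = 0.
Proof. by rewrite /Fn mulr0 truncn0 big_geq // scaler0. Qed.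

Lemma part_le (t d : R) : 0 <= t -> 0 < d -> t / (truncn (t / d)).+1%:R <= d.
Proof.
move=> t0 d0; have := truncnS_gt (t / d).
rewrite ltr_pdivrMr // => h.
by rewrite ler_pdivrMr ?ltr0n // mulrC ltW.
Qed.

Lemma ucK t e : 0 < e -> exists2 d, 0 < d & UCP t e d.
Proof. by move=> e0; have [d d0 H] := unif_cont fc t e0; exists d. Qed.

Lemma Fn_cvg t : 0 <= t -> cvg ((fun n => Fn n t) @ \oo).
Proof.
move=> t0; apply/cauchy_cvgP; apply: cauchy_exP => e e0.
set eps := e / (4 * (t + 2)).
have eps0 : 0 < eps by rewrite divr_gt0 // mulr_gt0 // ltr_wpDl.
have [d d0 uc] := ucK t eps0.
set K := (truncn (t / d)).+1.
have K0 : (0 < K)%N by [].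
have KR0 : 0 < K%:R :> R by rewrite ltr0n.
set h := t / K%:R.
have h0 : 0 <= h by rewrite divr_ge0.
have hd : h <= d by exact: part_le.
set S := \sum_(0 <= i < K) `|f (i%:R * h)|.
have S0 : 0 <= S by rewrite sumr_ge0.
set N := maxn K (maxn (truncn (d^-1)).+1 (truncn (S / eps)).+1).
have key : forall n, (N <= n)%N ->
    `|Fn n t - \sum_(0 <= i < K) h *: f (i%:R * h)| <= (t + 2) * eps.
  move=> n Nn.
  have n0 : (0 < n)%N by apply: leq_trans Nn; rewrite leq_max K0.
  have nR0 : 0 < n%:R :> R by rewrite ltr0n.
  have Kn : (K <= n)%N by apply: leq_trans Nn; rewrite leq_max leqnn.
  have nd : n%:R^-1 <= d.
    rewrite invf_ple ?posrE //; apply: ltW; apply: lt_le_trans (truncnS_gt _) _.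
    by rewrite ler_nat; apply: leq_trans Nn; rewrite leq_max leq_max leqnn orbT.
  have nS : S * n%:R^-1 <= eps.
    rewrite ler_pdivrMr //; apply: ltW.
    rewrite -ltr_pdivrMl // mulrC; apply: lt_le_trans (truncnS_gt _) _.
    by rewrite ler_nat; apply: leq_trans Nn; rewrite !leq_max leqnn !orbT.
  have tK : K%:R * h = t by rewrite /h mulrC divfK // gt_eqF.
  have -> : Fn n t = \sum_(0 <= i < K) (Fn n (i.+1%:R * h) - Fn n (i%:R * h)).
    by rewrite telescope_sumr // mul0r Fn0 subr0 tK.
  rewrite -sumrB.
  apply: le_trans (ler_norm_sum _ _ _) _.
  apply: le_trans (ler_sum_nat (G := fun i => (h + n%:R^-1) * eps +
      `|f (i%:R * h)| * n%:R^-1) _) _.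
    move=> i /andP[_ iK].
    have dh : i.+1%:R * h - i%:R * h = h by rewrite -mulrBl -natrB // subSnn mul1r.
    have := @Fn_est t eps d uc n n0 nd (i%:R * h) (i.+1%:R * h); rewrite dh; apply.
    - by rewrite mulr_ge0.
    - by rewrite ler_wpM2r // ler_nat leqnSn.
    - by rewrite -tK ler_wpM2r // ler_nat.
    - by [].
  rewrite big_split /= sumr_const_nat subn0 -(mulr_natl _ K) -big_distrl /= -/S.
  have Kh : K%:R * ((h + n%:R^-1) * eps) = (t + K%:R / n%:R) * eps.
    by rewrite mulrA mulrDr tK.
  rewrite Kh.
  have Kn1 : K%:R / n%:R <= 1 :> R by rewrite ler_pdivrMr // mul1r ler_nat.
  have H1 : (t + K%:R / n%:R) * eps <= (t + 1) * eps.
    by apply: ler_wpM2r; [exact: ltW | rewrite lerD2l].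
  lra.
exists (Fn N t); exists N => // n /= Nn.
rewrite -ball_normE /ball_ /=.
have := key N (leqnn N); have := key n Nn.
set Sg := \sum_(0 <= i < K) _.
move=> h1 h2.
have E : (t + 2) * eps = e / 4.
  have t2 : t + 2 != 0 by rewrite gt_eqF // ltr_wpDl.
  rewrite /eps; field.
  by rewrite t2.
rewrite (le_lt_trans (ler_distD Sg _ _)) //.
rewrite [`|Sg - _|]distrC.
lra.
Qed.


Definition F (t : R) : X := lim ((fun n => Fn n t) @ \oo).

Lemma Fn_F t : 0 <= t -> (fun n => Fn n t) @ \oo --> F t.
Proof. by move=> t0; apply: Fn_cvg. Qed.

Lemma F0 : F 0 = 0.
Proof.
rewrite /F (_ : (fun n => Fn n 0) = fun=> 0); first exact: lim_cst.
by apply/funext => n; rewrite Fn0.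
Qed.

Lemma near_inv (r : R) : 0 < r -> \forall n \near \oo, (0 < n)%N /\ n%:R^-1 <= r.
Proof.
move=> r0; exists (truncn r^-1).+1 => // n /= Nn; split; first exact: leq_trans Nn.
have nR0 : 0 < n%:R :> R by rewrite ltr0n (leq_trans _ Nn).
rewrite invf_ple ?posrE //; apply: ltW; apply: lt_le_trans (truncnS_gt _) _.
by rewrite ler_nat.
Qed.

Lemma lim_norm_le (u : nat -> X) (l : X) (c : R) : u @ \oo --> l ->
  (forall eta, 0 < eta -> \forall n \near \oo, `|u n| <= c + eta) -> `|l| <= c.
Proof.
move=> ul H; apply/ler_addgt0Pr => eta eta0.
have eta20 : 0 < eta / 2 by rewrite divr_gt0.
move/cvgrPdist_le : ul => /(_ _ eta20) ul.
near \oo => n.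
have h1 : `|l - u n| <= eta / 2 by near: n.
have h2 : `|u n| <= c + eta / 2 by near: n; apply: H.
have := ler_distD (u n) l 0; rewrite !subr0 => h3.
lra.
Unshelve. all: by end_near.
Qed.

Lemma F_est L e d : 0 < e -> 0 < d -> UCP L e d ->
  forall s t, 0 <= s -> s <= t -> t <= L -> t - s <= d ->
  `|F t - F s - (t - s) *: f s| <= (t - s) * e.
Proof.
move=> e0 d0 uc s t s0 st tL tsd.
apply: (@lim_norm_le (fun n => Fn n t - Fn n s - (t - s) *: f s)).
  apply: cvgB; last exact: cvg_cst.
  by apply: cvgB; apply: Fn_F => //; apply: le_trans st.
move=> eta eta0.
set k := e + `|f s| + 1.
have k0 : 0 < k by rewrite /k ltr_wpDl // addr_ge0 // ltW.
have r0 : 0 < Num.min d (eta / k) by rewrite lt_min d0 divr_gt0.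
near=> n.
have [n0 nr] : (0 < n)%N /\ n%:R^-1 <= Num.min d (eta / k) by near: n; apply: near_inv.
move: nr; rewrite le_min => /andP[nd ne].
have nR0 : 0 < n%:R :> R by rewrite ltr0n.
have iN0 : 0 <= n%:R^-1 :> R by rewrite invr_ge0 ltW.
move: ne; rewrite ler_pdivlMr // /k => ne.
have := Fn_est uc n0 nd s0 st tL tsd.
lra.
Unshelve. all: by end_near.
Qed.

Lemma tele0 (G : R -> X) (t : R) : 0 <= t ->
  (forall e, 0 < e -> exists2 d, 0 < d & forall s s', 0 <= s -> s <= s' -> s' <= t ->
     s' - s <= d -> `|G s' - G s| <= (s' - s) * e) -> G t = G 0.
Proof.
move=> t0 H; apply/eqP; rewrite -subr_eq0 -normr_le0.
apply/ler_addgt0Pr => e e0; rewrite add0r.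
have t10 : 0 < t + 1 by rewrite ltr_wpDl.
have eps0 : 0 < e / (t + 1) by rewrite divr_gt0.
have [d d0 Hd] := H _ eps0.
set K := (truncn (t / d)).+1.
have KR0 : 0 < K%:R :> R by rewrite ltr0n.
set h := t / K%:R.
have h0 : 0 <= h by rewrite divr_ge0 // ltW.
have hd : h <= d by exact: part_le.
have tK : K%:R * h = t by rewrite /h mulrC divfK // gt_eqF.
have -> : G t - G 0 = \sum_(0 <= i < K) (G (i.+1%:R * h) - G (i%:R * h)).
  by rewrite telescope_sumr // mul0r tK.
apply: le_trans (ler_norm_sum _ _ _) _.
apply: le_trans (ler_sum_nat (G := fun=> h * (e / (t + 1))) _) _.
  move=> i /andP[_ iK].
  have dh : i.+1%:R * h - i%:R * h = h by rewrite -mulrBl -natrB // subSnn mul1r.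
  rewrite -[in X in _ <= X * _]dh; apply: Hd.
  - by rewrite mulr_ge0.
  - by rewrite ler_wpM2r // ler_nat leqnSn.
  - by rewrite -tK ler_wpM2r // ler_nat.
  - by rewrite dh.
rewrite sumr_const_nat subn0 -mulr_natl mulrA tK.
rewrite mulrA ler_pdivrMr //; lra.
Qed.

Lemma F_deriv t : 0 <= t -> has_deriv_Rge0 F t (f t).
Proof.
move=> t0; apply/cvgrPdist_le => e e0.
have e20 : 0 < e / 2 by rewrite divr_gt0.
have [d d0 uc] := ucK (t + 1) e20.
have r0 : 0 < Num.min d 1 by rewrite lt_min; apply/andP; split.
rewrite /within /=; apply/nbhs_ballP; exists (Num.min d 1) => // h /=.
rewrite /ball /= sub0r normrN lt_min => /andP[hd h1] hne th.
have hd' : `|h| <= d by rewrite ltW.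
have [hpos|hneg] := ltP 0 h.
- have := @F_est (t + 1) (e / 2) d e20 d0 uc t (t + h) t0.
  rewrite lerDl ltW // => /(_ isT).
  rewrite lerD2l ltW; last by rewrite (le_lt_trans (ler_norm _)).
  have -> : t + h - t = h by rewrite addrC addKr.
  move=> /(_ isT).
  rewrite (le_trans (ler_norm h)) // => /(_ isT) Hb.
  have -> : f t - h^-1 *: (F (t + h) - F t) = - (h^-1 *: (F (t + h) - F t - h *: f t)).
    by rewrite [in RHS]scalerBr [in RHS]scalerA mulVf ?gt_eqF // scale1r opprB.
  rewrite normrN normrZ normfV (gtr0_norm hpos).
  rewrite mulrC ler_pdivrMr //; apply: (le_trans Hb).
  have := mulr_gt0 hpos e0; lra.
- have hlt : h < 0 by rewrite lt_neqAle hne hneg.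
  have ha : `|h| = - h by rewrite ltr0_norm.
  have Hb := @F_est (t + 1) (e / 2) d e20 d0 uc (t + h) t th.
  have tth : t - (t + h) = - h by rewrite opprD addrA subrr add0r.
  rewrite tth in Hb.
  have h1' : t + h <= t by rewrite gerDl.
  have h2' : t <= t + 1 by rewrite lerDl.
  have h3' : - h <= d by rewrite -ha.
  have {Hb}Hb := Hb h1' h2' h3'.
  have Hf : `|f t - f (t + h)| <= e / 2.
    apply: uc; [exact: t0 | exact: h2' | exact: th | exact: le_trans h1' h2' | by rewrite tth normrN].
  have -> : f t - h^-1 *: (F (t + h) - F t) =
      (f t - f (t + h)) + h^-1 *: (F t - F (t + h) - (- h) *: f (t + h)).
    rewrite scaleNr opprK [in RHS]scalerDr [in RHS]scalerA mulVf ?lt_eqF // scale1r.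
    by rewrite -[F t - F (t + h)]opprB scalerN addrA addrAC subrK.
  apply: le_trans (ler_normD _ _) _.
  rewrite normrZ normfV ha [e in _ <= e](splitr e) lerD //.
  have hn0 : 0 < - h by rewrite oppr_gt0.
  rewrite mulrC ler_pdivrMr //; apply: (le_trans Hb).
  by rewrite mulrC.
Qed.

Lemma norm_helper (x v : X) (c k : R) : 0 <= c ->
  `|x - c *: v| <= c * k -> `|x| <= c * (`|v| + k).
Proof.
move=> c0 H2; have := ler_distD (c *: v) x 0; rewrite !subr0 normrZ ger0_norm // => H1.
rewrite mulrDr; lra.
Qed.

Lemma F_cont : {within @Rge0 R, continuous F}.
Proof.
apply/withinP => t t0 e e0.
have [d d0 uc] := ucK (t + 1) ltr01.
set M := `|f t| + 3.
have M0 : 0 < M by rewrite /M ltr_wpDl.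
set r := Num.min (Num.min d 1) (e / M).
have r0 : 0 < r by rewrite /r !lt_min; apply/andP; split; [apply/andP; split|rewrite divr_gt0].
exists r => // s s0.
have rd : r <= d by rewrite /r !ge_min lexx.
have r1 : r <= 1 by rewrite /r !ge_min lexx orbT.
have rM : r <= e / M by rewrite /r ge_min lexx orbT.
rewrite ltr_norml => /andP[h1 h2].
have eM : forall c, 0 <= c -> c <= e / M -> c * M <= e.
  by move=> c c0 ce; rewrite -ler_pdivlMr.
have [ts|st] := leP t s.
- have := @F_est (t + 1) 1 d ltr01 d0 uc t s t0 ts.
  have sL : s <= t + 1 by lra.
  have sd : s - t <= d by lra.
  move=> /(_ sL sd) H0; have c0 : 0 <= s - t by rewrite subr_ge0.
  have H := norm_helper c0 H0.
  apply: (le_trans H); apply: le_trans (eM (s - t) _ _); rewrite ?subr_ge0 //; last by lra.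
  by apply: ler_wpM2l; rewrite ?subr_ge0 // /M lerD2l ler1n.
- have := @F_est (t + 1) 1 d ltr01 d0 uc s t s0 (ltW st).
  have sL : t <= t + 1 by lra.
  have sd : t - s <= d by lra.
  move=> /(_ sL sd) H0; have c0 : 0 <= t - s by rewrite subr_ge0 ltW.
  have H := norm_helper c0 H0.
  have Hf : `|f s - f t| <= 1.
    by apply: uc; [exact: s0 | lra | exact: t0 | lra | rewrite ler_norml; apply/andP; split; lra].
  have Hf' : `|f s| <= `|f t| + 1.
    have := ler_distD (f t) (f s) 0; rewrite !subr0; lra.
  rewrite -normrN opprB; apply: (le_trans H); apply: le_trans (eM (t - s) _ _); rewrite ?subr_ge0 ?ltW //; last by lra.
  rewrite ltr_pM2l ?subr_gt0 // /M.
  apply: le_lt_trans (lerD Hf' (lexx 1)) _; rewrite -addrA ltrD2l; lra.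
Qed.

End Prim.
Section BL.
Variables (R : realType) (V W : normedModType R) (g : V -> W).
Hypothesis hg : bounded_linear g.

Lemma bl0 : g 0 = 0.
Proof.
have H := hg.1 1 0 0; rewrite !scale1r addr0 in H.
by apply: (addrI (g 0)); rewrite addr0 -H.
Qed.
Lemma blD u v : g (u + v) = g u + g v.
Proof. by have := hg.1 1 u v; rewrite !scale1r. Qed.
Lemma blZ a u : g (a *: u) = a *: g u.
Proof. by have := hg.1 a u 0; rewrite !addr0 bl0 addr0. Qed.
Lemma blB u v : g (u - v) = g u - g v.
Proof. by rewrite blD -scaleN1r blZ scaleN1r. Qed.
Lemma bl_bound : exists2 M, 0 < M & forall u, `|g u| <= M * `|u|.
Proof.
case: hg => _ [M HM]; exists (`|M| + 1); first by rewrite ltr_wpDl.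
move=> u; apply: (le_trans (HM u)); apply: ler_wpM2r => //.
by rewrite (le_trans (ler_norm M)) // lerDl.
Qed.
End BL.

Lemma zid1 (V : zmodType) (A B C D E : V) : (A - B + C) - (D - E + C) = (A - D) - (B - E).
Proof. by rewrite [D - E + C]addrC addrKA !opprB addrACA [in RHS]addrACA [- D + _]addrC. Qed.
Lemma zid2 (V : zmodType) (P Q c : V) : (P + c) - (Q + c) = P - Q.
Proof. by rewrite [Q + c]addrC addrKA. Qed.

Section Semi.
Variables (R : realType) (X : completeNormedModType R) (T : R -> X -> X).
Hypothesis hT : C0_semigroup T.

Lemma T_bl t : 0 <= t -> bounded_linear (T t). Proof. by case: hT => H _; apply: H. Qed.
Lemma T_0 x : T 0 x = x. Proof. by case: hT => _ [H _]. Qed.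
Lemma T_add s t x : 0 <= s -> 0 <= t -> T (s + t) x = T s (T t x).
Proof. by case: hT => _ [_ [H _]]; apply: H. Qed.
Lemma T_cont x : {within @Rge0 R, continuous (fun t => T t x)}.
Proof. by case: hT => _ [_ [_ H]]. Qed.

Lemma shift (w : X) h t : 0 <= h -> 0 <= t ->
  T h (F (fun s => T s w) t) = F (fun s => T s w) (t + h) - F (fun s => T s w) h.
Proof.
move=> h0 t0.
set fw := fun s => T s w.
have fc : {within @Rge0 R, continuous fw} := @T_cont w.
set Fw := F fw.
have Gt0 : T h (Fw t) - Fw (t + h) + Fw h = T h (Fw 0) - Fw (0 + h) + Fw h.
  apply: (@tele0 R X (fun s => T h (Fw s) - Fw (s + h) + Fw h) t t0).
  move=> e e0.
  have [M M0 HM] := bl_bound (T_bl h0).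
  have eps0 : 0 < e / (M + 1) by rewrite divr_gt0 // ltr_wpDl // ltW.
  have [d d0 uc] := ucK fc (t + h) eps0.
  exists d => // s s' s0 ss' s't dd.
  have tth : t <= t + h by rewrite lerDl.
  have E1 := F_est fc eps0 d0 uc s0 ss' (le_trans s't tth) dd.
  have s'h : s' + h - (s + h) = s' - s by rewrite zid2.
  have a1 : s + h <= s' + h by rewrite lerD2r.
  have a2 : s' + h <= t + h by rewrite lerD2r.
  have a3 : s' + h - (s + h) <= d by rewrite s'h.
  have E2 := @F_est R X fw fc (t + h) _ d eps0 d0 uc (s + h) (s' + h) (addr_ge0 s0 h0) a1 a2 a3.
  rewrite s'h in E2.
  rewrite /= zid1.
  set c := s' - s in E1 E2 *.
  set eps := e / (M + 1) in E1 E2 *.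
  rewrite -(blB (T_bl h0)).
  have e1 : Fw s' - Fw s = (Fw s' - Fw s - c *: fw s) + c *: fw s by rewrite subrK.
  have e2 : Fw (s' + h) - Fw (s + h) = (Fw (s' + h) - Fw (s + h) - c *: fw (s + h)) + c *: fw (s + h).
    by rewrite subrK.
  rewrite e1 e2 (blD (T_bl h0)) (blZ (T_bl h0)).
  have tf : T h (fw s) = fw (s + h) by rewrite /fw -T_add // addrC.
  rewrite tf zid2.
  apply: le_trans (ler_normB _ _) _.
  have H1 := HM (Fw s' - Fw s - c *: fw s).
  have c0 : 0 <= c by rewrite subr_ge0.
  have H1' : M * `|Fw s' - Fw s - c *: fw s| <= M * (c * eps) by rewrite ler_wpM2l // ltW.
  have Heq : c * e = M * (c * eps) + c * eps.
    have Meq : M + 1 != 0 by rewrite gt_eqF // ltr_wpDl // ltW.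
    rewrite /eps; field.
    exact: Meq.
  lra.
rewrite /Fw F0 (bl0 (T_bl h0)) !add0r addNr in Gt0.
have E : T h (F fw t) = (T h (F fw t) - F fw (t + h) + F fw h) - F fw h + F fw (t + h).
  by rewrite addrK subrK.
by rewrite E Gt0 sub0r addrC.
Qed.
End Semi.

Section Gen.
Variables (R : realType) (X : completeNormedModType R) (T : R -> X -> X)
  (D : set X) (A : X -> X).
Hypotheses (hT : C0_semigroup T) (hG : is_generator_of T D A).

Lemma within_sub (t : R) (Q : set R) : 0 <= t ->
  within (fun h : R => 0 <= t + h) (0 : R)^' Q -> (0 : R)^'+ Q.
Proof.
move=> t0 H.
have H' : nbhs (0:R) (fun y : R => y != 0 -> 0 <= t + y -> Q y) := H.
change (nbhs (0:R) (fun u : R => 0 < u -> Q u)).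
apply: filterS H' => h Hh hpos; apply: Hh; first by rewrite gt_eqF.
by rewrite addr_ge0 // ltW.
Qed.

Lemma deriv_right (x : R -> X) t d : 0 <= t -> has_deriv_Rge0 x t d ->
  (fun h : R => h^-1 *: (x (t + h) - x t)) @ (0 : R)^'+ --> d.
Proof.
move=> t0 H; apply: cvg_trans H.
by move=> Q /= HQ; apply: within_sub t0 HQ.
Qed.

Lemma lim_uniq (f : R -> X) (a b : X) :
  f @ (0 : R)^'+ --> a -> f @ (0 : R)^'+ --> b -> a = b.
Proof. by move=> Ha Hb; apply: (cvg_unique _ Ha Hb). Qed.

Lemma gen_value x l : (fun h : R => h^-1 *: (T h x - x)) @ (0 : R)^'+ --> l ->
  D x /\ A x = l.
Proof.
move=> H; have Dx : D x by apply/(hG.1 x); exists l.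
by split => //; apply: lim_uniq (hG.2 x Dx) H.
Qed.

Lemma gen_lin a x z : D x -> D z -> D (a *: x + z) /\ A (a *: x + z) = a *: A x + A z.
Proof.
move=> Dx Dz; apply: gen_value.
have Hq : (fun h : R => a *: (h^-1 *: (T h x - x)) + h^-1 *: (T h z - z)) @ (0:R)^'+
    --> a *: A x + A z.
  apply: cvgD; last exact: (hG.2 z Dz).
  by apply: cvgZr; exact: (hG.2 x Dx).
apply: cvg_trans Hq; apply: near_eq_cvg; near=> h.
have h0 : 0 < h by near: h; exact: nbhs_right_gt.
have bl := T_bl hT (ltW h0).
rewrite /= (blD bl) (blZ bl) opprD addrACA -scalerBr [in RHS]scalerDr.
by rewrite !scalerA mulrC.
Unshelve. all: by end_near.
Qed.

Lemma zid3 (V : zmodType) (c P Q : V) : (c + P) - (c + Q) = P - Q.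
Proof. by rewrite ![c + _]addrC zid2. Qed.

Lemma gen_F (w : X) t : 0 <= t ->
  D (F (fun s => T s w) t) /\ A (F (fun s => T s w) t) = T t w - w.
Proof.
move=> t0; set fw := fun s => T s w.
have fc : {within @Rge0 R, continuous fw} := @T_cont _ _ _ hT w.
apply: gen_value.
have Hq : (fun h : R => h^-1 *: (F fw (t + h) - F fw t) - h^-1 *: (F fw (0 + h) - F fw 0))
    @ (0:R)^'+ --> T t w - w.
  rewrite -{2}(T_0 hT w).
  apply: cvgB; apply: deriv_right => //; apply: F_deriv => //.
apply: cvg_trans Hq; apply: near_eq_cvg; near=> h.
have h0 : 0 < h by near: h; exact: nbhs_right_gt.
rewrite /= (shift hT w (ltW h0) t0) add0r F0 subr0 -scalerBr.
by rewrite addrAC.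
Unshelve. all: by end_near.
Qed.

End Gen.

Section Traj.
Variables (R : realType) (U X Y : completeNormedModType R) (T : R -> X -> X)
  (D : set X) (A : X -> X) (B : U -> X) (C : X -> Y).
Hypotheses (hT : C0_semigroup T) (hG : is_generator_of T D A)
  (hB : bounded_linear B) (hC : graph_bounded D A C).

Lemma zid4 (V : zmodType) (c P b : V) : c + (P - (c + b)) = P - b.
Proof. by rewrite addrCA opprD addNKr. Qed.

Lemma traj (x0 : X) (u0 : U) : D x0 ->
  let w := A x0 + B u0 in
  let xx := fun t => x0 + F (fun s => T s w) t in
  Sys D A B C ((fun _ => u0), xx, (fun t => C (xx t))) /\
  has_deriv_Rge0 xx 0 w /\ xx 0 = x0.
Proof.
move=> Dx0 w xx.
set fw := fun s => T s w.
have fc : {within @Rge0 R, continuous fw} := @T_cont _ _ _ hT w.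
have Dxx : forall t, 0 <= t -> D (xx t).
  move=> t t0; have [DF _] := gen_F hT hG w t0.
  by have [H _] := gen_lin hT hG 1 Dx0 DF; rewrite scale1r in H.
have Axx : forall t, 0 <= t -> A (xx t) = T t w - B u0.
  move=> t t0; have [DF AF] := gen_F hT hG w t0.
  have [_ H] := gen_lin hT hG 1 Dx0 DF; rewrite !scale1r in H.
  by rewrite /xx H AF /w zid4.
have dxx : forall t, 0 <= t -> has_deriv_Rge0 xx t (fw t).
  move=> t t0; have := F_deriv fc t0.
  have E : (fun h => h^-1 *: (xx (t + h) - xx t)) = (fun h => h^-1 *: (F fw (t + h) - F fw t)).
    by apply/funext => h; rewrite /xx zid3.
  by rewrite /has_deriv_Rge0 E.
have xc : {within @Rge0 R, continuous xx}.
  apply/withinP => t t0 e e0.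
  have [r r0 Hr] := (withinP _).1 (F_cont fc) t t0 e e0.
  by exists r => // s s0 st; rewrite /xx zid3; apply: Hr.
have Ac : {within @Rge0 R, continuous (fun t => A (xx t))}.
  apply/withinP => t t0 e e0.
  have [r r0 Hr] := (withinP _).1 fc t t0 e e0.
  by exists r => // s s0 st; rewrite !Axx // zid2; apply: Hr.
split; last split.
- rewrite /Sys /=; split.
    by apply/withinP => t t0 e e0; exists 1 => // s _ _; rewrite subrr normr0 ltW.
  split => //; split => //; split => //; split.
    exists fw; split; first by split => //.
    by move=> t t0; rewrite Axx // subrK.
  split => //.
  case: hC => hClin [M0 HM].
  set M' := `|M0| + 1.
  have M'0 : 0 < M' by rewrite /M' ltr_wpDl.
  apply/withinP => t t0 e e0.
  have e20 : 0 < e / (2 * M') by rewrite divr_gt0 // mulr_gt0.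
  have [r1 r10 H1] := (withinP _).1 xc t t0 _ e20.
  have [r2 r20 H2] := (withinP _).1 fc t t0 _ e20.
  exists (Num.min r1 r2); first by rewrite lt_min r10 r20.
  move=> s s0; rewrite lt_min => /andP[st1 st2].
  have Ds := Dxx s s0; have Dt := Dxx t t0.
  have [Dv Av] := gen_lin hT hG (-1) Dt Ds.
  have -> : C (xx s) - C (xx t) = C ((-1) *: xx t + xx s).
    by rewrite hClin // scaleN1r addrC.
  apply: le_trans (HM _ Dv) _.
  rewrite Av !scaleN1r ![- _ + _]addrC !Axx // zid2.
  have h1 := H1 s s0 st1; have h2 := H2 s s0 st2.
  set S := `|xx s - xx t| + `|fw s - fw t|.
  have S0 : 0 <= S by rewrite addr_ge0.
  have H3 : M0 * S <= M' * S.
    by apply: ler_wpM2r => //; rewrite (le_trans (ler_norm M0)) // lerDl.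
  have H4 : M' * S <= M' * (e / (2 * M') + e / (2 * M')).
    by apply: ler_wpM2l; [exact: ltW | rewrite /S lerD].
  have Heq : M' * (e / (2 * M') + e / (2 * M')) = e.
    by field; rewrite gt_eqF.
  lra.
- have := dxx _ (lexx 0).
  have -> : fw 0 = w by exact: (T_0 hT).
  done.
- by rewrite /xx F0 addr0.
Qed.
End Traj.

Lemma half (R : realType) (U X Y : completeNormedModType R)
    (D : set X) (A : X -> X) (B : U -> X) (C : X -> Y)
    (D' : set X) (A' : X -> X) (B' : U -> X) (C' : X -> Y) :
  generates_C0 D A -> bounded_linear B -> graph_bounded D A C ->
  Sys D A B C = Sys D' A' B' C' ->
  forall x0 u0, D x0 -> D' x0 /\ A x0 + B u0 = A' x0 + B' u0 /\ C x0 = C' x0.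
Proof.
move=> [T [hT hG]] hB hC E x0 u0 Dx0.
have [Hsys [Hd Hx0]] := traj B hT hG hC u0 Dx0.
rewrite E /Sys /= in Hsys.
case: Hsys => _ [HD' [_ [_ [[dx [[Hdx _] Hdxe]] [_ Hy]]]]].
have le00 : (0 : R) <= 0 by [].
split; first by have := HD' 0 le00; rewrite Hx0.
split.
  have := lim_uniq (deriv_right le00 Hd) (deriv_right le00 (Hdx 0 le00)).
  by rewrite Hdxe // Hx0.
by have := Hy 0 le00; rewrite Hx0.
Qed.

Unset Implicit Arguments.

Theorem proposition2p4 (R : realType) (U X Y : completeNormedModType R)
    (S : relation U X Y)
    (D : set X) (A : X -> X) (B : U -> X) (C : X -> Y)
    (D' : set X) (A' : X -> X) (B' : U -> X) (C' : X -> Y) :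
  generates_C0 D A -> bounded_linear B -> graph_bounded D A C ->
  generates_C0 D' A' -> bounded_linear B' -> graph_bounded D' A' C' ->
  S = Sys D A B C -> S = Sys D' A' B' C' ->
  D = D' /\ (forall x, D x -> A x = A' x) /\ B = B' /\
  (forall x, D x -> C x = C' x).
Proof.
move=> gA hB hC gA' hB' hC' E1 E2.
have E : Sys D A B C = Sys D' A' B' C' by rewrite -E1 -E2.
have H1 := half gA hB hC E.
have H2 := half gA' hB' hC' (esym E).
have AA : forall x, D x -> A x = A' x.
  move=> x Dx; have [_ [H _]] := H1 x 0 Dx.
  by move: H; rewrite (bl0 hB) (bl0 hB') !addr0.
have D0 : D 0.
  case: gA => T [hT hG].
  have [H _] := gen_F hT hG 0 (lexx 0).
  by rewrite F0 in H.
split.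
  by apply/seteqP; split => x Dx; [exact: (H1 x 0 Dx).1 | exact: (H2 x 0 Dx).1].
split => //.
split.
  apply/funext => u; have [_ [H _]] := H1 0 u D0.
  by move: H; rewrite (AA 0 D0) => /addrI.
by move=> x Dx; have [_ [_ H]] := H1 x 0 Dx.
Qed.
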